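(* Let $\Re$ be a commutative ring with unit, let $n\ge 3$, and let $U_n$ be the cycle with vertices $v_1,\dots,v_n$ and edges $(v_i,v_{i+1})$, $i=1,\dots,n$ (indices taken modulo $n$, so $v_0=v_n$, $v_{n+1}=v_1$), equipped with a vertex-weight function $f_n:V(U_n)\to\Re$ and an edge-weight function $g_n:E(U_n)\to\Re$. Then for every fixed vertex $v_j$, \[ F(U_n; f_n, g_n; v_j)=\sum_{q=1}^{n}\Big(f_n(v_j)\prod_{k=0}^{q-2}g_n(v_k^1,v_k^2)f_n(v_k^2)\Big(1+\sum_{s=0}^{n-q-1}\prod_{k=0}^{s}g_n(v_k^3,v_k^4)f_n(v_k^4)\Big)\Big), \] where $v_k^1=v_{(j+k)\bmod n}$, $v_k^2=v_{(j+k+1)\bmod n}$, $v_k^3=v_{(n+j-k)\bmod n}$, $v_k^4=v_{(n+j-k-1)\bmod n}$ (with $v_0$ meaning $v_n$), and empty products equal $1$.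
   Context: For a graph $G$ with vertex weights $f$ and edge weights $g$ in $\Re$, a subtree is a nonempty subgraph of $G$ that is a tree (single vertices included). The weight of a subtree $T$ is $\omega(T)=\prod_{v\in V(T)}f(v)\prod_{e\in E(T)}g(e)$. For a vertex $v$, $F(G;f,g;v)=\sum \omega(T)$, the sum over all subtrees $T$ of $G$ containing $v$. *)

(* Defs.v *)
From HB Require Import structures.
From mathcomp Require Import all_boot all_order all_algebra.
From mathcomp Require Import boolp.
Set Implicit Arguments. Unset Strict Implicit. Unset Printing Implicit Defensive.
Import GRing.Theory.
Local Open Scope ring_scope.

Section Subtrees.
Variable T : finType.

(* A simple graph on vertex set T is given by a symmetric irreflexive
   adjacency relation e; its edges are the 2-element sets [set x; y]
   with e x y. *)
Definition is_edge (e : rel T) (A : {set T}) : Prop :=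
  exists x y, e x y /\ A = [set x; y].

Definition is_subgraph (e : rel T) (S : {set T}) (E : {set {set T}}) : Prop :=
  forall A, A \in E -> is_edge e A /\ A \subset S.

Definition sub_adj (E : {set {set T}}) : rel T := fun x y => [set x; y] \in E.

Definition sub_connected (S : {set T}) (E : {set {set T}}) : Prop :=
  forall x y, x \in S -> y \in S -> connect (sub_adj E) x y.

Definition sub_acyclic (E : {set {set T}}) : Prop :=
  ~ exists p : seq T, [/\ (3 <= size p)%N, uniq p & cycle (sub_adj E) p].

Definition is_subtree (e : rel T) (S : {set T}) (E : {set {set T}}) : Prop :=
  [/\ S != set0, is_subgraph e S E, sub_connected S E & sub_acyclic E].

Definition tree_weight (R : comPzRingType) (f : T -> R) (g : {set T} -> R)
    (S : {set T}) (E : {set {set T}}) : R :=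
  (\prod_(v in S) f v) * (\prod_(A in E) g A).

Definition Fsub (R : comPzRingType) (e : rel T) (f : T -> R) (g : {set T} -> R)
    (v : T) : R :=
  \sum_(p : {set T} * {set {set T}} | `[< is_subtree e p.1 p.2 /\ v \in p.1 >])
     tree_weight f g p.1 p.2.
End Subtrees.

(* The cycle U_n on 'I_n: vertex v_i (1 <= i <= n) is the ordinal i %% n,
   so v_n is ordinal 0; edges {v_i, v_{i+1}}. *)
Definition cycle_adj (n : nat) : rel 'I_n :=
  fun x y => (val y == (val x).+1 %% n)%N || (val x == (val y).+1 %% n)%N.

Lemma n3_pos (n : nat) : (3 <= n)%N -> (0 < n)%N.
Proof. by move=> H; apply: leq_trans H. Qed.

Definition cv (n : nat) (Hn : (3 <= n)%N) (m : nat) : 'I_n :=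
  Ordinal (ltn_pmod m (n3_pos Hn)).
Arguments cycle_adj n : clear implicits.

(* Main.v *)
Require Import Defs.
From HB Require Import structures.
From mathcomp Require Import all_boot all_order all_algebra.
From mathcomp Require Import boolp.
From mathcomp Require Import zify ring.
Import GRing.Theory.
Set Implicit Arguments. Unset Strict Implicit. Unset Printing Implicit Defensive.



Lemma mod2 n a : (a < n + n)%N -> (a %% n = if a < n then a else a - n)%N.
Proof. move=> h. case: ltnP => h1. by rewrite modn_small.
have -> : a = (a - n) + n by lia. rewrite modnDr modn_small; lia. Qed.

Ltac elim_mod := repeat match goal with |- context[(?a %% ?n)%N] =>
  lazymatch a with context[(_ %% _)%N] => fail | _ =>
   rewrite (@mod2 n a); [ case: (ltnP a n) => ? | lia ] end end.

Definition vx n (Hn : (3 <= n)%N) (b : 'I_n) (t : nat) : 'I_n := cv Hn (b + t).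
Definition ix n (b v : 'I_n) : nat := ((v + n - b) %% n)%N.
Definition succ n (Hn : (3 <= n)%N) (v : 'I_n) : 'I_n := cv Hn v.+1.
Definition edv n (Hn : (3 <= n)%N) (v : 'I_n) : {set 'I_n} := [set v; succ Hn v].

Lemma vx_val n Hn b t : val (@vx n Hn b t) = ((b + t) %% n)%N. Proof. by []. Qed.
Lemma succ_val n Hn v : val (@succ n Hn v) = (v.+1 %% n)%N. Proof. by []. Qed.

Lemma ix_lt n (Hn : (3 <= n)%N) (b v : 'I_n) : (ix b v < n)%N.
Proof. by rewrite /ix ltn_mod; lia. Qed.

Lemma vx_ix n Hn (b v : 'I_n) : vx Hn b (ix b v) = v.
Proof. apply: val_inj; rewrite vx_val /ix.
case: b => x ? ; case: v => y ? /=. elim_mod; lia. Qed.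

Lemma ix_vx n Hn (b : 'I_n) t : ix b (vx Hn b t) = (t %% n)%N.
Proof. rewrite /ix vx_val.
case: b => x ? /=. rewrite -(modnDmr x t).
have : (t %% n < n)%N by rewrite ltn_mod; lia.
move: (t %% n)%N => u ?. elim_mod; lia. Qed.

Lemma ix_inj n (Hn : (3 <= n)%N) (b u v : 'I_n) : ix b u = ix b v -> u = v.
Proof. by move=> h; rewrite -(vx_ix Hn b u) -(vx_ix Hn b v) h. Qed.

Lemma ix_b n (b : 'I_n) : ix b b = 0%N.
Proof. rewrite /ix. have -> : (b + n - b = n)%N by lia. by rewrite modnn. Qed.

Lemma ix_succ n Hn (b x : 'I_n) : ix b (succ Hn x) = ((ix b x).+1 %% n)%N.
Proof. rewrite /ix succ_val. case: b => u ?; case: x => v ? /=. elim_mod; lia. Qed.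

Lemma succ_vx n Hn (b : 'I_n) t : succ Hn (vx Hn b t) = vx Hn b t.+1.
Proof. apply: val_inj; rewrite succ_val !vx_val -addn1 modnDml addn1 addnS //. Qed.

Lemma succ_neq n Hn (x : 'I_n) : succ Hn x != x.
Proof. apply/eqP => /(congr1 val); rewrite succ_val. case: x => u ? /=. elim_mod; lia. Qed.

Lemma ix_pred n Hn (m : 'I_n) : ix (succ Hn m) m = n.-1.
Proof. rewrite /ix succ_val. case: m => u ? /=. elim_mod; lia. Qed.



Lemma set2_eq (T : finType) (a b c d : T) : c != d ->
  [set a; b] = [set c; d] -> (a = c /\ b = d) \/ (a = d /\ b = c).
Proof.
move=> cd E.
have : c \in [set a; b] by rewrite E set21.
have : d \in [set a; b] by rewrite E set22.
rewrite !inE => /orP[]/eqP Hd /orP[]/eqP Hc.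
- by move: cd; rewrite Hc Hd eqxx.
- by right.
- by left.
- by move: cd; rewrite Hc Hd eqxx.
Qed.

Lemma edv_inj n (Hn : (3 <= n)%N) (x y : 'I_n) : edv Hn x = edv Hn y -> x = y.
Proof.
move=> E. have : x \in edv Hn y by rewrite -E /edv set21.
rewrite /edv !inE => /orP[/eqP //|/eqP Hx].
have : succ Hn x \in edv Hn y by rewrite -E /edv set22.
rewrite /edv !inE => /orP[]/eqP/(congr1 (ix y)); rewrite Hx !ix_succ ix_b.
- rewrite (@modn_small 1) ?(@modn_small 2); lia.
- rewrite (@modn_small 1) ?(@modn_small 2); lia.
Qed.

Lemma adj_edge n (Hn : (3 <= n)%N) (x y : 'I_n) : cycle_adj n x y ->
  [set x; y] = edv Hn x \/ [set x; y] = edv Hn y.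
Proof.
rewrite /cycle_adj => /orP[]/eqP H.
- left; rewrite /edv; congr [set _; _]; apply: val_inj; rewrite succ_val //.
- right; rewrite /edv setUC; congr [set _; _]; apply: val_inj; rewrite succ_val //.
Qed.

Lemma sub_edges n (Hn : (3 <= n)%N) S E : is_subgraph (cycle_adj n) S E ->
  forall A, A \in E -> exists x, A = edv Hn x.
Proof.
move=> H A /H[[x [y [xy ->]]] _]. case: (adj_edge Hn xy) => ->; eauto.
Qed.

Lemma step_pos n (Hn : (3 <= n)%N) (m : 'I_n) (E : {set {set 'I_n}}) :
  (forall A, A \in E -> exists2 x, A = edv Hn x & x != m) ->
  forall u w, sub_adj E u w ->
  ix (succ Hn m) w = (ix (succ Hn m) u).+1 \/ ix (succ Hn m) u = (ix (succ Hn m) w).+1.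
Proof.
move=> HE u w /HE [x Ex xm].
have key : (ix (succ Hn m) x).+1 < n.
  have := ix_lt Hn (succ Hn m) x.
  have : ix (succ Hn m) x != n.-1.
    apply: contra xm => /eqP; rewrite -(ix_pred Hn m) => /(ix_inj Hn) ->. done.
  lia.
have sx : ix (succ Hn m) (succ Hn x) = (ix (succ Hn m) x).+1 by rewrite ix_succ modn_small.
have nx : x != succ Hn x by rewrite eq_sym succ_neq.
case: (set2_eq nx Ex) => [[-> ->]|[-> ->]]; rewrite sx; [left|right]; done.
Qed.



Lemma cross (T : eqType) (e : rel T) (h : T -> nat) :
  (forall u w, e u w -> h w = (h u).+1 \/ h u = (h w).+1) ->
  forall s x z, path e x s -> (h x <= z < h (last x s))%N ->
  exists u w, [/\ e u w, h u = z & h w = z.+1].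
Proof.
move=> He; elim=> [|y s IH] x z /=; first lia.
move=> /andP[exy ps] hz.
case: (He _ _ exy) => hy.
- case: (eqVneq z (h x)) => [->|zx]; first by exists x, y.
  apply: (IH y z ps); lia.
- apply: (IH y z ps); lia.
Qed.

Lemma acyc (T : finType) (e : rel T) (h : T -> nat) :
  (forall u w, e u w -> h w = (h u).+1 \/ h u = (h w).+1) -> injective h ->
  ~ exists p : seq T, [/\ (3 <= size p)%N, uniq p & cycle e p].
Proof.
move=> He hinj [p [sz up cp]].
case: p sz up cp => [//|x0 p'] sz up cp.
case: (@arg_maxnP T x0 (fun i => i \in x0 :: p') h) => [|x xp xmax].
  by rewrite inE eqxx.
case: (rot_to xp) => i s' Er.
have cp2 : cycle e (x :: s') by rewrite -Er rot_cycle.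
have up2 : uniq (x :: s') by rewrite -Er rot_uniq.
have sz2 : (3 <= size (x :: s'))%N by rewrite -Er size_rot.
have memp : forall y, y \in x :: s' -> (h y <= h x)%N.
  by move=> y; rewrite -Er mem_rot => /xmax.
case: s' Er cp2 up2 sz2 memp => [|y1 [|y2 s3]] // Er cp2 up2 sz2 memp.
move: cp2.
have -> : cycle e [:: x, y1, y2 & s3] = path e x (rcons [:: y1, y2 & s3] x) by [].
rewrite rcons_path => /andP[p1 eyk].
have exy1 : e x y1 by move: p1 => /= /andP[].
set yk := last y1 (y2 :: s3).
have {}eyk : e yk x by exact: eyk.
have ykin : yk \in y2 :: s3 by rewrite /yk /= mem_last.
have y1n : y1 \notin y2 :: s3 by move: up2 => /= /and3P[_ ].
have h1 : (h y1 <= h x)%N by apply: memp; rewrite !inE eqxx orbT.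
have hk : (h yk <= h x)%N by apply: memp; rewrite inE in_cons ykin !orbT.
have e1 : h y1 = h yk.
  case: (He _ _ exy1) => H1; first lia.
  case: (He _ _ eyk) => H2; lia.
move/hinj: e1 => e1. by move: y1n; rewrite e1 ykin.
Qed.



Definition Sset n (b : 'I_n) q bb : {set 'I_n} :=
  [set v | (ix b v < q) || (n - bb <= ix b v)].
Definition Eset n (Hn : (3 <= n)%N) (b : 'I_n) q bb : {set {set 'I_n}} :=
  [set edv Hn v | v in [set v | ((ix b v).+1 < q) || (n - bb <= ix b v)]].

Lemma sub_adj_sym (T : finType) (E : {set {set T}}) x y : sub_adj E x y = sub_adj E y x.
Proof. by rewrite /sub_adj setUC. Qed.

Lemma vx0 n Hn (b : 'I_n) : vx Hn b 0 = b.
Proof. apply: val_inj; rewrite vx_val addn0 modn_small //. Qed.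

Lemma vxn n Hn (b : 'I_n) : vx Hn b n = b.
Proof. apply: val_inj; rewrite vx_val modnDr modn_small //. Qed.

Lemma in_Eset n Hn (b : 'I_n) q bb t : (t < n)%N -> ((t.+1 < q) || (n - bb <= t)) ->
  sub_adj (Eset Hn b q bb) (vx Hn b t) (vx Hn b t.+1).
Proof.
move=> tn c; rewrite /sub_adj -succ_vx; apply/imsetP; exists (vx Hn b t) => //.
by rewrite inE ix_vx modn_small.
Qed.

Lemma fwd n (Hn : (3 <= n)%N) (j : 'I_n) q bb : (1 <= q)%N -> (q + bb <= n)%N ->
  is_subtree (cycle_adj n) (Sset j q bb) (Eset Hn j q bb) /\ j \in Sset j q bb.
Proof.
move=> q1 qb.
have jS : j \in Sset j q bb by rewrite inE ix_b q1.
split => //; split.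
- by apply/set0Pn; exists j.
- move=> A /imsetP[v]; rewrite inE => c ->; split.
    exists v, (succ Hn v); split => //; by rewrite /cycle_adj succ_val eqxx.
  apply/subsetP => x; rewrite !inE => /orP[]/eqP ->; rewrite ?ix_succ.
    move: c; lia.
  have := ix_lt Hn j v; move: c; move: (ix j v) => u c ul. elim_mod; lia.
- have cj : forall v, v \in Sset j q bb -> connect (sub_adj (Eset Hn j q bb)) j v.
    have fw : forall t, (t < q)%N -> connect (sub_adj (Eset Hn j q bb)) j (vx Hn j t).
      elim=> [|t IH] tq; first by rewrite vx0.
      apply: connect_trans (IH _) _; first lia.
      apply: connect1; apply: in_Eset; lia.
    have bw : forall k, (k < bb)%N -> connect (sub_adj (Eset Hn j q bb)) j (vx Hn j (n - 1 - k)).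
      elim=> [|k IH] kb.
        apply: connect1; rewrite sub_adj_sym.
        have h := @in_Eset n Hn j q bb (n - 1 - 0).
        rewrite (_ : (n - 1 - 0).+1 = n) in h; last lia.
        rewrite vxn in h. apply: h; lia.
      apply: connect_trans (IH _) _; first lia.
      apply: connect1; rewrite sub_adj_sym.
      have -> : (n - 1 - k = (n - 1 - k.+1).+1)%N by lia.
      apply: in_Eset; lia.
    move=> v; rewrite inE => /orP[H|H].
      by rewrite -(vx_ix Hn j v); apply: fw.
    have := ix_lt Hn j v => H2.
    rewrite -(vx_ix Hn j v).
    have -> : ix j v = (n - 1 - (n - 1 - ix j v))%N by lia.
    apply: bw; lia.
  move=> x y /cj xS /cj yS.
  have cs : connect_sym (sub_adj (Eset Hn j q bb)) by apply: sym_connect_sym => u w; apply: sub_adj_sym.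
  by apply: connect_trans yS; rewrite cs.
- set m := vx Hn j q.-1.
  apply: (@acyc _ _ (ix (succ Hn m))).
    apply: step_pos => A /imsetP[v]; rewrite inE => c ->; exists v => //.
    apply/negP => /eqP vm; move: c; rewrite vm /m ix_vx modn_small; lia.
  move=> u w; exact: ix_inj.
Qed.



Lemma A1 n t pj lo hi : (t < n)%N -> (lo <= pj <= hi)%N -> (hi < n)%N ->
  (lo <= (t + pj) %% n <= hi)%N = ((t < hi - pj + 1) || (n - (pj - lo) <= t))%N.
Proof. move=> *. elim_mod; apply/idP/idP; lia. Qed.
Lemma A2 n t pj lo hi : (t < n)%N -> (lo <= pj <= hi)%N -> (hi < n)%N ->
  (lo <= (t + pj) %% n < hi)%N = ((t.+1 < hi - pj + 1) || (n - (pj - lo) <= t))%N.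
Proof. move=> *. elim_mod; apply/idP/idP; lia. Qed.

Lemma ix_shift n (b j v : 'I_n) : ix b v = ((ix j v + ix b j) %% n)%N.
Proof. rewrite /ix. case: b => b ?; case: j => j ?; case: v => v ? /=. elim_mod; lia. Qed.

Lemma path_map_iota (T : Type) (e : rel T) (f : nat -> T) :
  (forall t, e (f t) (f t.+1)) -> forall k a, path e (f a) [seq f t | t <- iota a.+1 k].
Proof. move=> H; elim=> [|k IH] a //=. by rewrite H IH. Qed.

Lemma missing_edge n (Hn : (3 <= n)%N) (j : 'I_n) (E : {set {set 'I_n}}) :
  sub_acyclic E -> exists m, edv Hn m \notin E.
Proof.
move=> acy. case: (boolP [forall m, edv Hn m \in E]) => [/forallP all|/forallPn [m hm]]; last by exists m.
exfalso; apply: acy.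
exists [seq vx Hn j t | t <- iota 0 n]; split.
- by rewrite size_map size_iota.
- rewrite map_inj_in_uniq ?iota_uniq // => x y; rewrite !mem_iota => /andP[_ xn] /andP[_ yn] /(congr1 (ix j)).
  by rewrite !ix_vx !modn_small.
- have -> : iota 0 n = 0 :: iota 1 (n - 1) by rewrite {1}(_ : n = (n-1).+1) //; lia.
  rewrite /= /cycle.
  have -> : rcons [seq vx Hn j t | t <- iota 1 (n - 1)] (vx Hn j 0) = [seq vx Hn j t | t <- iota 1 (n - 1).+1].
    rewrite -[(n - 1).+1]addn1 iotaD map_cat cats1 /=. congr rcons. apply: val_inj. rewrite !vx_val.
    have -> : (1 + (n - 1) = n)%N by lia. by rewrite addn0 modnDr.
  apply: (@path_map_iota _ _ (vx Hn j)) => t. rewrite /sub_adj -succ_vx. exact: all.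
Qed.

Lemma bwd n (Hn : (3 <= n)%N) (j : 'I_n) S E : is_subtree (cycle_adj n) S E -> j \in S ->
  exists q bb, [/\ (1 <= q)%N, (q + bb <= n)%N, S = Sset j q bb & E = Eset Hn j q bb].
Proof.
move=> [ne sg conn acy] jS.
have [m hm] := missing_edge Hn j acy.
have HE : forall A, A \in E -> exists2 x, A = edv Hn x & x != m.
  move=> A AE; have [x Ax] := sub_edges Hn sg AE; exists x => //.
  by apply/negP => /eqP xm; move: hm; rewrite -xm -Ax AE.
have step := step_pos HE.
set b := succ Hn m in step.
have adjS : forall u w, sub_adj E u w -> u \in S /\ w \in S.
  move=> u w /sg [_ sub]; split; apply: (subsetP sub); rewrite !inE eqxx ?orbT //.
case: (@arg_minnP _ j (fun v => v \in S) (ix b)) => // xlo xloS xlomin.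
case: (@arg_maxnP _ j (fun v => v \in S) (ix b)) => // xhi xhiS xhimax.
have K : forall z, (ix b xlo <= z < ix b xhi)%N -> sub_adj E (vx Hn b z) (vx Hn b z.+1).
  move=> z hz. have := conn _ _ xloS xhiS => /connectP [p pp lp].
  have := @cross _ _ _ step p xlo z pp; rewrite -lp => /(_ hz) [u [w [euw hu hw]]].
  by rewrite -(vx_ix Hn b u) -(vx_ix Hn b w) hu hw in euw.
have Schar : forall v, (v \in S) = (ix b xlo <= ix b v <= ix b xhi)%N.
  move=> v; apply/idP/idP => [vS|/andP[h1 h2]].
    by apply/andP; split; [exact: xlomin | exact: xhimax].
  case: (ltnP (ix b v) (ix b xhi)) => h3.
    have /adjS [] : sub_adj E (vx Hn b (ix b v)) (vx Hn b (ix b v).+1) by apply: K; rewrite h1 h3.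
    by rewrite vx_ix.
  have vh : v = xhi by apply: (ix_inj Hn (b:=b)); lia.
  by rewrite vh.
have jr : (ix b xlo <= ix b j <= ix b xhi)%N by rewrite -Schar.
have hin : (ix b xhi < n)%N by apply: ix_lt.
exists (ix b xhi - ix b j + 1)%N, (ix b j - ix b xlo)%N; split; [lia|lia| |].
- apply/setP => v. rewrite Schar inE (ix_shift b j v) A1 //; exact: ix_lt.
- apply/setP => A; apply/idP/idP.
  + move=> AE. have [x Ax xm] := HE A AE.
    have sxadj : sub_adj E x (succ Hn x) by change (edv Hn x \in E); rewrite -Ax.
    have [xS sxS] := adjS _ _ sxadj.
    have sx : ix b (succ Hn x) = (ix b x).+1.
      move: (ix_succ Hn b x) (ix_lt Hn b x) (step _ _ sxadj).
      move: (ix b x) (ix b (succ Hn x)) => u w; move=> -> ul. elim_mod; lia.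
    rewrite Ax; apply/imsetP; exists x => //; rewrite inE.
    rewrite -A2; [|exact: ix_lt|exact: jr|exact: hin].
    rewrite -ix_shift. move: xS sxS; rewrite !Schar sx. lia.
  + move=> /imsetP [x]; rewrite inE => c ->.
    have hz : (ix b xlo <= ix b x < ix b xhi)%N by rewrite (ix_shift b j x) A2 //; exact: ix_lt.
    have := K _ hz. by rewrite vx_ix -succ_vx vx_ix.
Qed.



Lemma inS n (Hn : (3 <= n)%N) (j : 'I_n) q bb t : (t < n)%N ->
  (vx Hn j t \in Sset j q bb) = ((t < q) || (n - bb <= t))%N.
Proof. by move=> tn; rewrite inE ix_vx modn_small. Qed.

Lemma inE' n (Hn : (3 <= n)%N) (j : 'I_n) q bb t : (t < n)%N ->
  (edv Hn (vx Hn j t) \in Eset Hn j q bb) = ((t.+1 < q) || (n - bb <= t))%N.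
Proof.
move=> tn; rewrite /Eset mem_imset; last by move=> x y; apply: edv_inj.
by rewrite inE ix_vx modn_small.
Qed.

Lemma SE_inj n (Hn : (3 <= n)%N) (j : 'I_n) q bb q' bb' :
  (1 <= q)%N -> (q + bb <= n)%N -> (1 <= q')%N -> (q' + bb' <= n)%N ->
  Sset j q bb = Sset j q' bb' -> Eset Hn j q bb = Eset Hn j q' bb' -> q = q' /\ bb = bb'.
Proof.
move=> h1 h2 h3 h4 ES EE.
have PS : forall t, (t < n)%N -> ((t < q) || (n - bb <= t))%N = ((t < q') || (n - bb' <= t))%N.
  by move=> t tn; rewrite -!(inS Hn j) // ES.
have PE : forall t, (t < n)%N -> ((t.+1 < q) || (n - bb <= t))%N = ((t.+1 < q') || (n - bb' <= t))%N.
  by move=> t tn; rewrite -!(inE' Hn j) // EE.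
have eq : q = q'.
  case: (ltngtP q q') => // H.
  - have := PS q; have := PE q.-1; lia.
  - have := PS q'; have := PE q'.-1; lia.
subst q'; split => //.
case: (ltngtP bb bb') => // H.
- have := PS (n - bb'); lia.
- have := PS (n - bb); lia.
Qed.

Local Open Scope ring_scope.


Lemma split_prod (R : comPzRingType) (F : nat -> R) n a c : (a <= c <= n)%N ->
  \prod_(0 <= t < n | ((t < a)%N || (c <= t)%N)) F t =
  (\prod_(0 <= t < a) F t) * \prod_(c <= t < n) F t.
Proof.
move=> /andP[ac cn]. rewrite big_mkcond /=.
rewrite (big_cat_nat (leq0n a)) /=; last lia.
rewrite (big_cat_nat ac cn) /=.
rewrite [X in _ * (X * _)]big1_seq ?mul1r; last first.
  move=> i; rewrite mem_index_iota => hi; case: ifP => //; lia.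
congr (_ * _); apply: eq_big_nat => i hi; case: ifP => //; lia.
Qed.

Lemma rev_prod (R : comPzRingType) (F : nat -> R) n bb : (bb <= n)%N ->
  \prod_(n - bb <= t < n) F t = \prod_(0 <= k < bb) F (n - 1 - k)%N.
Proof.
move=> bn. rewrite big_nat_rev (big_addn 0 n (n - bb)).
have -> : (n - (n - bb) = bb)%N by lia.
apply: eq_big_nat => i hi; congr F; lia.
Qed.

Lemma ord_prod (R : comPzRingType) n (Hn : (3 <= n)%N) (j : 'I_n) (P : nat -> bool) (F : 'I_n -> R) :
  \prod_(v | P (ix j v)) F v = \prod_(0 <= t < n | P t) F (vx Hn j t).
Proof.
pose iv (v : 'I_n) : 'I_n := Ordinal (ix_lt Hn j v).
pose tv (t : 'I_n) : 'I_n := vx Hn j t.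
have c1 : cancel iv tv by move=> v; rewrite /tv /iv /= vx_ix.
have c2 : cancel tv iv by move=> t; apply: val_inj; rewrite /tv /iv /= ix_vx modn_small.
rewrite (reindex tv); last by exists iv => x _; [exact: c2 | exact: c1].
rewrite big_mkord; apply: eq_bigl => t; by rewrite /tv ix_vx modn_small.
Qed.

Lemma prod_recl (R : comPzRingType) (F : nat -> R) q : (1 <= q)%N ->
  \prod_(0 <= t < q) F t = F 0%N * \prod_(0 <= k < q.-1) F k.+1.
Proof. case: q => // q _; by rewrite big_nat_recl. Qed.

Lemma weight (R : comPzRingType) n (Hn : (3 <= n)%N) (f : 'I_n -> R) (g : {set 'I_n} -> R)
  (j : 'I_n) q bb : (1 <= q)%N -> (q + bb <= n)%N ->
  tree_weight f g (Sset j q bb) (Eset Hn j q bb) =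
  (f j * (\prod_(0 <= k < q.-1)
              (g [set cv Hn (j + k)%N; cv Hn (j + k + 1)%N] * f (cv Hn (j + k + 1)%N))))
  * \prod_(0 <= k < bb)
                    (g [set cv Hn (n + j - k)%N; cv Hn (n + j - k - 1)%N]
                     * f (cv Hn (n + j - k - 1)%N)).
Proof.
move=> q1 qb. rewrite /tree_weight.
have -> : \prod_(v in Sset j q bb) f v =
    \prod_(0 <= t < n | ((t < q)%N || (n - bb <= t)%N)) f (vx Hn j t).
  rewrite -(ord_prod Hn j (fun t => ((t < q)%N || (n - bb <= t)%N))).
  by apply: eq_bigl => v; rewrite inE.
have -> : \prod_(A in Eset Hn j q bb) g A =
    \prod_(0 <= t < n | ((t < q.-1)%N || (n - bb <= t)%N)) g (edv Hn (vx Hn j t)).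
  rewrite big_imset /=; last by move=> x y _ _; exact: edv_inj.
  rewrite -(ord_prod Hn j (fun t => ((t < q.-1)%N || (n - bb <= t)%N)) (fun v => g (edv Hn v))).
  apply: eq_bigl => v; rewrite inE. by case: q q1 qb => // q _ _ /=; rewrite ?ltnS.
rewrite !split_prod; try lia.
rewrite prod_recl ?rev_prod; try lia.
rewrite vx0 !big_split /=.
have e1 : \prod_(0 <= k < q.-1) f (vx Hn j k.+1) = \prod_(0 <= k < q.-1) f (cv Hn (j + k + 1)).
  by apply: eq_big_nat => k _; rewrite /vx addnS addn1.
have e2 : \prod_(0 <= k < bb) f (vx Hn j (n - 1 - k)) = \prod_(0 <= k < bb) f (cv Hn (n + j - k - 1)).
  apply: eq_big_nat => k hk; rewrite /vx; congr (f (cv Hn _)); lia.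
have e3 : \prod_(0 <= t < q.-1) g (edv Hn (vx Hn j t)) =
    \prod_(0 <= k < q.-1) g [set cv Hn (j + k); cv Hn (j + k + 1)].
  by apply: eq_big_nat => k _; rewrite /edv succ_vx /vx addnS addn1.
have e4 : \prod_(0 <= k < bb) g (edv Hn (vx Hn j (n - 1 - k))) =
    \prod_(0 <= k < bb) g [set cv Hn (n + j - k); cv Hn (n + j - k - 1)].
  apply: eq_big_nat => k hk; rewrite /edv succ_vx setUC /vx.
  congr (g [set cv Hn _; cv Hn _]); lia.
rewrite e1 e2 e3 e4. ring.
Qed.

Unset Implicit Arguments.

Theorem theorem2 (R : comPzRingType) (n : nat) (Hn : (3 <= n)%N)
    (f : 'I_n -> R) (g : {set 'I_n} -> R) (j : 'I_n) :
  Fsub (cycle_adj n) f g j =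
  \sum_(1 <= q < n.+1)
    (f j * (\prod_(0 <= k < q.-1)
              (g [set cv Hn (j + k)%N; cv Hn (j + k + 1)%N] * f (cv Hn (j + k + 1)%N)))
         * (1 + \sum_(0 <= s < n - q)
                  \prod_(0 <= k < s.+1)
                    (g [set cv Hn (n + j - k)%N; cv Hn (n + j - k - 1)%N]
                     * f (cv Hn (n + j - k - 1)%N)))).
Proof.
pose Fw (q : nat) := \prod_(0 <= k < q.-1)
              (g [set cv Hn (j + k)%N; cv Hn (j + k + 1)%N] * f (cv Hn (j + k + 1)%N)).
pose Bw (bb : nat) := \prod_(0 <= k < bb)
                    (g [set cv Hn (n + j - k)%N; cv Hn (n + j - k - 1)%N]
                     * f (cv Hn (n + j - k - 1)%N)).
rewrite /Fsub.
pose D : {set 'I_n.+1 * 'I_n.+1} := [set x : 'I_n.+1 * 'I_n.+1 | (1 <= x.1)%N && (x.1 + x.2 <= n)%N].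
pose phi (x : 'I_n.+1 * 'I_n.+1) := (Sset j x.1 x.2, Eset Hn j x.1 x.2).
rewrite (eq_bigl (fun p => p \in phi @: D)); last first.
  move=> p; apply/asboolP/imsetP.
  - move=> [st jS]. have [q [bb [q1 qb ES EE]]] := bwd Hn st jS.
    have qn : (q < n.+1)%N by lia.
    have bn : (bb < n.+1)%N by lia.
    exists (inord q, inord bb); first by rewrite inE /= !inordK // q1 qb.
    by rewrite (surjective_pairing p) ES EE /phi /= !inordK.
  - move=> [x]; rewrite inE => /andP[q1 qb] ->. exact: fwd.
rewrite big_imset /=; last first.
  move=> x y; rewrite !inE => /andP[a1 a2] /andP[a3 a4] [ES EE].
  have [e1 e2] := SE_inj a1 a2 a3 a4 ES EE.
  rewrite [x]surjective_pairing [y]surjective_pairing; congr pair; apply: val_inj; [exact: e1|exact: e2].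
rewrite (eq_bigr (fun x : 'I_n.+1 * 'I_n.+1 => (f j * Fw x.1) * Bw x.2)); last first.
  by move=> x; rewrite inE => /andP[? ?]; exact: weight.
have -> : \sum_(x in D) (f j * Fw x.1) * Bw x.2 =
    \sum_(q < n.+1 | (1 <= q)%N) \sum_(bb < n.+1 | (q + bb <= n)%N) (f j * Fw q) * Bw bb.
  by rewrite pair_big_dep; apply: eq_bigl => x; rewrite inE.
rewrite (big_nat_widenl 1 0) // big_mkord.
apply: eq_big => [q //|q q1].
rewrite -mulr_sumr; congr (_ * _).
have -> : 1 + \sum_(0 <= s < n - q) Bw s.+1 = \sum_(0 <= bb < (n - q).+1) Bw bb.
  by rewrite big_nat_recl // /Bw big_geq.
rewrite (big_nat_widen 0 (n - q).+1 n.+1) ?ltnS ?leq_subr // big_mkord.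
apply: eq_bigl => bb /=. have := ltn_ord q. lia.
Qed.
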